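(* Let $\eta>0$, $F(p)=-\eta\sum_{i=1}^N\log p_i$, and $\tilde\Phi(L)=\min_{p\in\Delta_N}\langle L,p\rangle+F(p)$. Then $\tilde\Phi$ is $(2,1/\eta)$-differentially consistent.
   Context: $\Delta_N$ is the probability simplex in $\mathbb{R}^N$. A function $f:\mathbb{R}^N\to\mathbb{R}$ is $(\gamma,\epsilon)$-differentially consistent if it is twice differentiable and $-\nabla^2_{ii}f\le\epsilon(\nabla_if)^\gamma$ for all $i\in[N]$. *)

(* Defs.v *)
From mathcomp Require Import all_boot all_order all_algebra.
From mathcomp Require Import all_classical all_reals all_analysis.
Set Implicit Arguments. Unset Strict Implicit. Unset Printing Implicit Defensive.
Import Order.TTheory GRing.Theory Num.Theory.
Import numFieldNormedType.Exports.
Local Open Scope ring_scope.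
Local Open Scope classical_set_scope.

(* R^N is represented by row vectors 'rV[R]_N; coordinate i of x is x 0 i. *)

Definition unitv (R : realType) (N : nat) (i : 'I_N) : 'rV[R]_N := delta_mx 0 i.

Definition partial (R : realType) (N : nat) (i : 'I_N)
  (f : 'rV[R]_N -> R) (x : 'rV[R]_N) : R := 'D_(unitv R i) f x.

Definition twice_differentiable (R : realType) (N : nat) (f : 'rV[R]_N -> R) :=
  (forall x, differentiable f x) /\
  (forall (i : 'I_N) x, differentiable (partial i f) x).

(* (gamma, eps)-differential consistency; gamma is taken in nat here
   (the statement only needs gamma = 2). *)
Definition differentially_consistent (R : realType) (N : nat)
  (gamma : nat) (eps : R) (f : 'rV[R]_N -> R) :=
  twice_differentiable f /\
  (forall (i : 'I_N) (x : 'rV[R]_N),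
      - partial i (partial i f) x <= eps * (partial i f x) ^+ gamma).

(* points of the probability simplex where F is finite (all p_i > 0);
   on the boundary F = +oo, so they never contribute to the minimum *)
Definition open_simplex (R : realType) (N : nat) : set 'rV[R]_N :=
  [set p | (forall i, 0 < p 0 i) /\ \sum_(i < N) p 0 i = 1].

Definition log_barrier (R : realType) (N : nat) (eta : R) (p : 'rV[R]_N) : R :=
  - eta * \sum_(i < N) ln (p 0 i).

(* Phi~(L) = min_{p in simplex} <L,p> + F(p)  (the minimum is attained,
   so it equals the infimum) *)
Definition Phi_tilde (R : realType) (N : nat) (eta : R) (L : 'rV[R]_N) : R :=
  inf [set \sum_(i < N) L 0 i * p 0 i + log_barrier eta p
      | p in @open_simplex R N].

(* Main.v *)
From HB Require Import structures.
Require Import Defs.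
From mathcomp Require Import all_boot all_order all_algebra.
From mathcomp Require Import all_classical all_reals all_analysis.
From mathcomp Require Import ring lra.
Set Implicit Arguments. Unset Strict Implicit. Unset Printing Implicit Defensive.
Import Order.TTheory GRing.Theory Num.Theory.
Import numFieldNormedType.Exports.
Local Open Scope ring_scope.
Local Open Scope classical_set_scope.


Lemma coord_le_norm (R : realType) n (h : 'rV[R]_n) i : `|h 0 i| <= `|h|.
Proof.
have -> : `|h| = mx_norm h by [].
rewrite mx_normrE.
exact: (le_bigmax 0 (fun ij : 'I_1 * 'I_n => `|h ij.1 ij.2|) (0, i)).
Qed.

Lemma cont_sum (T : topologicalType) (R : realType) n (F : 'I_n -> T -> R) x :
  (forall i, {for x, continuous (F i)}) ->
  {for x, continuous (fun y => \sum_i F i y)}.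
Proof.
move=> Fc.
rewrite /continuous_at.
apply: cvg_big => //; last by move=> i _; exact: Fc.
exact: add_continuous.
Qed.

Lemma diff_crit (R : realType) n (f : 'rV[R]_n -> R) (x : 'rV[R]_n)
  (g : 'I_n -> 'rV[R]_n -> R) :
  (forall i, {for x, continuous (g i)}) ->
  (forall y, `|f y - f x - \sum_i (y - x) 0 i * g i x|
     <= \sum_i `|(y - x) 0 i| * `|g i y - g i x|) ->
  differentiable f x /\ (forall i, 'D_(unitv R i) f x = g i x).
Proof.
move=> gc hf.
pose c i := g i x.
have lin : linear (fun h : 'rV[R]_n => \sum_i h 0 i * c i).
  move=> a u v /=; rewrite scaler_sumr -big_split /=; apply: eq_bigr => i _.
  have -> : (a *: u + v) 0 i = a * u 0 i + v 0 i.
    by rewrite /GRing.add /GRing.scale /= !mxE.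
  by rewrite mulrDl -mulrA.
pose dfM := GRing.isLinear.Build _ _ _ _ _ lin.
pose df : {linear 'rV[R]_n -> R} := HB.pack (fun h : 'rV[R]_n => \sum_i h 0 i * c i) dfM.
have dfE h : df h = \sum_i h 0 i * c i by [].
have dfc : continuous df.
  suff : continuous (fun h : 'rV[R]_n => \sum_i h 0 i * c i) by [].
  move=> h; apply: (@cont_sum _ R n (fun (i : 'I_n) (y : 'rV[R]_n) => y 0 i * c i)) => i.
  apply: continuousM; first exact: coord_continuous.
  exact: cst_continuous.
have ho : f \o shift x = cst (f x) + df +o_ (0 : 'rV[R]_n) id.
  apply/eqaddoP => eps eps0.
  have e'0 : 0 < eps / n.+1%:R by rewrite divr_gt0.
  have gc' i : \forall h \near (0 : 'rV[R]_n), `|g i x - g i (h + x)| < eps / n.+1%:R.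
    have := gc i; move=> /cvgr_dist_lt /(_ _ e'0).
    move=> H; have := (nbhs0P _ x).1 H; apply: filterS => e; by rewrite [x + e]addrC.
  apply: filterS (filter_forall _ gc') => h Hh.
  rewrite /= !fctE.
  have := hf (h + x); rewrite addrK => H1.
  rewrite opprD addrA (le_trans H1) //.
  apply: le_trans (_ : \sum_(i < n) `|h| * (eps / n.+1%:R) <= _).
    apply: ler_sum => i _; apply: ler_pM => //; first exact: coord_le_norm.
    by rewrite distrC ltW.
  rewrite sumr_const card_ord -[_ *+ n]mulr_natr -mulrA [leLHS]mulrC ler_wpM2r //.
  rewrite -mulrA ler_piMr ?ltW // mulrC ltr_pdivrMr ?ltr0n // mul1r ltr_nat //.
have dd : 'd f x = df :> (_ -> _) := diff_unique dfc ho.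
have dfx : differentiable f x by apply/diff_locallyP; rewrite dd; split.
split=> // i; rewrite deriveE // dd dfE.
rewrite (bigD1 i) //= big1 => [|j ji].
  by rewrite /unitv mxE !eqxx mul1r addr0.
by rewrite /unitv mxE (negbTE ji) andbF mul0r.
Unshelve. all: by end_near.
Qed.


Lemma cont_div (T : topologicalType) (R : realType) (a : T -> R) (c : R) x :
  {for x, continuous a} -> a x != 0 -> {for x, continuous (fun y => c / a y)}.
Proof.
move=> ac ax; apply: continuousM; first exact: cst_continuous.
exact: continuousV.
Qed.

Definition spec (R : realType) n (eta : R) (L : 'rV[R]_n) (l : R) :=
  (forall i, 0 < L 0 i + l) /\ \sum_i eta / (L 0 i + l) = 1.

Lemma spec_ex (R : realType) n (eta : R) (L : 'rV[R]_n) :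
  (0 < n)%N -> 0 < eta -> exists l, spec eta L l.
Proof.
case: n L => // n L _ eta0.
have [i0 _ Hi0] := @arg_minP _ R _ ord0 xpredT (fun i => L 0 i) isT.
set m := L 0 i0.
have Hm : forall i, m <= L 0 i by move=> i; exact: Hi0.
pose G (l : R) := \sum_i eta / (L 0 i + l).
pose l0 := eta - m. pose l1 := n.+1%:R * eta - m.
have n1 : 1 <= n.+1%:R :> R by rewrite ler1n.
have l01 : l0 <= l1.
  rewrite /l0 /l1; have : eta <= n.+1%:R * eta by rewrite ler_peMl // ltW.
  lra.
have pos l i : l0 <= l -> eta <= L 0 i + l.
  by move=> hl; have := Hm i; rewrite /l0 in hl; lra.
have Gl0 : 1 <= G l0.
  rewrite /G (bigD1 i0) //=.
  have -> : L 0 i0 + l0 = eta by rewrite /l0 /m; lra.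
  rewrite divff ?gt_eqF // lerDl; apply: sumr_ge0 => i _.
  by rewrite divr_ge0 ?ltW // (lt_le_trans eta0) // pos.
have Gl1 : G l1 <= 1.
  rewrite /G; apply: le_trans (_ : \sum_(i < n.+1) (n.+1%:R)^-1 <= 1).
    apply: ler_sum => i _.
    have h1 : n.+1%:R * eta <= L 0 i + l1 by have := Hm i; rewrite /l1; lra.
    have h0 : 0 < n.+1%:R * eta by rewrite mulr_gt0.
    have -> : n.+1%:R^-1 = eta / (n.+1%:R * eta).
      by field; rewrite lt0r_neq0 //= -natr1 addrC ltr_pwDr // ler0n.
    rewrite ler_pM2l // lef_pV2 ?posrE //.
    exact: lt_le_trans h1.
  by rewrite sumr_const card_ord -[_ *+ n.+1]mulr_natr mulVf.
have Gc : {within `[l0, l1], continuous G}.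
  apply: continuous_in_subspaceT => l hl.
  have hl0 : l0 <= l by move: hl; rewrite inE /= in_itv /= => /andP[].
  apply: cont_sum => i; apply: cont_div; last first.
    by rewrite gt_eqF // (lt_le_trans eta0) // pos.
  apply: continuousD; first exact: cst_continuous.
  exact: cvg_id.
have Hb : Num.min (G l0) (G l1) <= 1 <= Num.max (G l0) (G l1).
  apply/andP; split; first by rewrite ge_min Gl1 orbT.
  by rewrite le_max Gl0.
have [c Hc Gc1] := @IVT R G l0 l1 1 l01 Gc Hb.
have hc0 : l0 <= c by move: Hc; rewrite in_itv /= => /andP[].
exists c; split; last exact: Gc1.
by move=> i; apply: (lt_le_trans eta0); exact: pos.
Qed.


Definition lam (R : realType) n (eta : R) (L : 'rV[R]_n) : R := xget 0 (spec eta L).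
Definition av (R : realType) n (eta : R) (L : 'rV[R]_n) i := L 0 i + lam eta L.
Definition pv (R : realType) n (eta : R) (L : 'rV[R]_n) i := eta / av eta L i.
Definition pvec (R : realType) n (eta : R) (L : 'rV[R]_n) : 'rV[R]_n :=
  \row_i pv eta L i.
Definition vf (R : realType) n (eta : R) (L q : 'rV[R]_n) :=
  \sum_i L 0 i * q 0 i + log_barrier eta q.

Lemma lam_spec (R : realType) n (eta : R) (L : 'rV[R]_n) :
  (0 < n)%N -> 0 < eta -> spec eta L (lam eta L).
Proof. by move=> n0 e0; apply: xgetPex; exact: spec_ex. Qed.

Lemma av_gt0 (R : realType) n (eta : R) (L : 'rV[R]_n) i :
  (0 < n)%N -> 0 < eta -> 0 < av eta L i.
Proof. by move=> n0 e0; have [h _] := lam_spec L n0 e0; exact: h. Qed.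

Lemma pv_gt0 (R : realType) n (eta : R) (L : 'rV[R]_n) i :
  (0 < n)%N -> 0 < eta -> 0 < pv eta L i.
Proof. by move=> n0 e0; rewrite /pv divr_gt0 // av_gt0. Qed.

Lemma pvec_simplex (R : realType) n (eta : R) (L : 'rV[R]_n) :
  (0 < n)%N -> 0 < eta -> open_simplex (pvec eta L).
Proof.
move=> n0 e0; split=> [i|]; first by rewrite mxE pv_gt0.
have [_ <-] := lam_spec L n0 e0.
by apply: eq_bigr => i _; rewrite mxE.
Qed.

Lemma opt (R : realType) n (eta : R) (L q : 'rV[R]_n) :
  (0 < n)%N -> 0 < eta -> open_simplex q -> vf eta L (pvec eta L) <= vf eta L q.
Proof.
move=> n0 e0 [qpos qsum].
have [_ psum] := lam_spec L n0 e0.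
have key i : eta * ln (q 0 i) - eta * ln (pvec eta L 0 i)
    <= av eta L i * q 0 i - av eta L i * pvec eta L 0 i.
  have a0 := av_gt0 L i n0 e0.
  have p0 := pv_gt0 L i n0 e0.
  have q0 := qpos i.
  rewrite mxE -mulrBr.
  have -> : ln (q 0 i) - ln (pv eta L i) = ln (q 0 i / pv eta L i).
    by rewrite lnM ?posrE ?invr_gt0 // lnV ?posrE.
  have h : ln (q 0 i / pv eta L i) <= q 0 i / pv eta L i - 1.
    have hx : -1 < q 0 i / pv eta L i - 1.
      have : 0 < q 0 i / pv eta L i by rewrite divr_gt0.
      lra.
    by have := le_ln1Dx hx; rewrite addrC subrK.
  apply: le_trans (ler_wpM2l (ltW e0) h) _.
  rewrite le_eqVlt; apply/orP; left; apply/eqP.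
  rewrite /pv; field.
  by rewrite !lt0r_neq0.
have S : \sum_i (eta * ln (q 0 i) - eta * ln (pvec eta L 0 i))
    <= \sum_i (av eta L i * q 0 i - av eta L i * pvec eta L 0 i).
  by apply: ler_sum => i _; exact: key.
rewrite sumrB -!mulr_sumr in S.
have E : \sum_i (av eta L i * q 0 i - av eta L i * pvec eta L 0 i) =
   \sum_i L 0 i * q 0 i - \sum_i L 0 i * pvec eta L 0 i
   + lam eta L * (\sum_i q 0 i - \sum_i pvec eta L 0 i).
  rewrite mulrBr !mulr_sumr -!sumrB -big_split /=; apply: eq_bigr => i _.
  rewrite /av; ring.
have P1 : \sum_i pvec eta L 0 i = 1.
  by rewrite -psum; apply: eq_bigr => i _; rewrite mxE.
rewrite E qsum P1 in S.
rewrite /vf /log_barrier.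
move: S; rewrite subrr mulr0 addr0 !mulNr; lra.
Qed.

Lemma Phi_val (R : realType) n (eta : R) (L : 'rV[R]_n) :
  (0 < n)%N -> 0 < eta -> Phi_tilde eta L = vf eta L (pvec eta L).
Proof.
move=> n0 e0; rewrite /Phi_tilde.
set S := [set _ | p in _].
have Sv : S (vf eta L (pvec eta L)) by exists (pvec eta L) => //; exact: pvec_simplex.
have lb : lbound S (vf eta L (pvec eta L)).
  by move=> _ [q qs <-]; exact: opt.
apply/le_anti/andP; split.
  by apply: ge_inf => //; exists (vf eta L (pvec eta L)).
by apply: lb_le_inf => //; exists (vf eta L (pvec eta L)).
Qed.


Definition wt (R : realType) n (eta : R) (x y : 'rV[R]_n) i :=
  (av eta x i)^-1 / av eta y i.
Definition Wt (R : realType) n (eta : R) (x y : 'rV[R]_n) :=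
  \sum_i wt eta x y i.
Definition cc (R : realType) n (eta : R) (x y : 'rV[R]_n) i :=
  wt eta x y i / Wt eta x y.

Lemma wt_gt0 (R : realType) n (eta : R) (x y : 'rV[R]_n) i :
  (0 < n)%N -> 0 < eta -> 0 < wt eta x y i.
Proof.
by move=> n0 e0; rewrite /wt divr_gt0 ?invr_gt0 // av_gt0.
Qed.

Lemma Wt_gt0 (R : realType) n (eta : R) (x y : 'rV[R]_n) :
  (0 < n)%N -> 0 < eta -> 0 < Wt eta x y.
Proof.
move=> n0 e0; rewrite /Wt (bigD1 (Ordinal n0)) //=.
rewrite ltr_pwDl ?wt_gt0 // sumr_ge0 // => i _.
by rewrite ltW // wt_gt0.
Qed.

Lemma cc_ge0 (R : realType) n (eta : R) (x y : 'rV[R]_n) i :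
  (0 < n)%N -> 0 < eta -> 0 <= cc eta x y i.
Proof. by move=> n0 e0; rewrite /cc ltW // divr_gt0 ?wt_gt0 ?Wt_gt0. Qed.

Lemma sum_cc (R : realType) n (eta : R) (x y : 'rV[R]_n) :
  (0 < n)%N -> 0 < eta -> \sum_i cc eta x y i = 1.
Proof.
move=> n0 e0; rewrite /cc -mulr_suml -/(Wt eta x y) divff //.
exact: lt0r_neq0 (Wt_gt0 x y n0 e0).
Qed.

Lemma lam_diff (R : realType) n (eta : R) (x y : 'rV[R]_n) :
  (0 < n)%N -> 0 < eta ->
  lam eta y - lam eta x = - \sum_i (y - x) 0 i * cc eta x y i.
Proof.
move=> n0 e0.
have [_ sx] := lam_spec x n0 e0; have [_ sy] := lam_spec y n0 e0.
set d := lam eta y - lam eta x.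
have h i : eta / av eta x i - eta / av eta y i
    = eta * (((y - x) 0 i + d) * wt eta x y i).
  have ax := av_gt0 x i n0 e0; have ay := av_gt0 y i n0 e0.
  move: ax ay; rewrite /wt /d /av !mxE => ax ay.
  by field; rewrite !lt0r_neq0.
have H : eta * \sum_i ((y - x) 0 i + d) * wt eta x y i = 0.
  rewrite mulr_sumr -(eq_bigr _ (fun i _ => h i)) sumrB.
  by rewrite /av sx sy subrr.
move/eqP: H; rewrite mulf_eq0 (negbTE (lt0r_neq0 e0)) /= => /eqP H.
have H2 : \sum_i (y - x) 0 i * wt eta x y i + d * Wt eta x y = 0.
  rewrite -[RHS]H /Wt mulr_sumr -big_split; apply: eq_bigr => i _ /=; ring.
have E : \sum_i (y - x) 0 i * cc eta x y i
    = (\sum_i (y - x) 0 i * wt eta x y i) / Wt eta x y.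
  by rewrite mulr_suml; apply: eq_bigr => i _; rewrite /cc mulrA.
rewrite E.
have Wn := Wt_gt0 x y n0 e0.
have -> : \sum_i (y - x) 0 i * wt eta x y i = - (d * Wt eta x y) by lra.
by field; rewrite lt0r_neq0.
Qed.

Lemma lam_lip (R : realType) n (eta : R) (x y : 'rV[R]_n) :
  (0 < n)%N -> 0 < eta -> `|lam eta y - lam eta x| <= `|y - x|.
Proof.
move=> n0 e0; rewrite lam_diff // normrN.
apply: le_trans (ler_norm_sum _ _ _) _.
apply: le_trans (_ : \sum_i `|y - x| * cc eta x y i <= _).
  apply: ler_sum => i _; rewrite normrM (ger0_norm (cc_ge0 _ _ _ n0 e0)).
  by rewrite ler_wpM2r ?cc_ge0 // coord_le_norm.
by rewrite -mulr_sumr sum_cc // mulr1.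
Qed.

Lemma lam_cont (R : realType) n (eta : R) (x : 'rV[R]_n) :
  (0 < n)%N -> 0 < eta -> {for x, continuous (lam eta)}.
Proof.
move=> n0 e0; apply/(cvgrPdist_lt (FF := nbhs_filter x)) => e e0'.
have : \forall y \near x, `|x - y| < e.
  exact: (cvgr_dist_lt (FF := nbhs_filter x) (fun y => y) x cvg_id e e0').
apply: filterS => y hy.
by apply: le_lt_trans hy; exact: lam_lip.
Qed.


Lemma av_cont (R : realType) n (eta : R) (x : 'rV[R]_n) i :
  (0 < n)%N -> 0 < eta -> {for x, continuous (fun y => av eta y i)}.
Proof.
move=> n0 e0; apply: continuousD; first exact: coord_continuous.
exact: lam_cont.
Qed.

Lemma pv_cont (R : realType) n (eta : R) (x : 'rV[R]_n) i :
  (0 < n)%N -> 0 < eta -> {for x, continuous (fun y => pv eta y i)}.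
Proof.
move=> n0 e0; apply: cont_div; first exact: av_cont.
by rewrite lt0r_neq0 // av_gt0.
Qed.

Lemma wt_cont (R : realType) n (eta : R) (x y0 : 'rV[R]_n) i :
  (0 < n)%N -> 0 < eta -> {for y0, continuous (fun y => wt eta x y i)}.
Proof.
move=> n0 e0; apply: cont_div; first exact: av_cont.
by rewrite lt0r_neq0 // av_gt0.
Qed.

Lemma cc_cont (R : realType) n (eta : R) (x y0 : 'rV[R]_n) i :
  (0 < n)%N -> 0 < eta -> {for y0, continuous (fun y => cc eta x y i)}.
Proof.
move=> n0 e0; apply: continuousM; first exact: wt_cont.
apply: continuousV; first by rewrite lt0r_neq0 // Wt_gt0.
by apply: cont_sum => j; exact: wt_cont.
Qed.

Lemma crit_eq (R : realType) n (f : 'rV[R]_n -> R) (x : 'rV[R]_n)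
  (g : 'I_n -> 'rV[R]_n -> R) :
  (forall i, {for x, continuous (g i)}) ->
  (forall y, f y - f x = \sum_i (y - x) 0 i * g i y) ->
  differentiable f x /\ (forall i, 'D_(unitv R i) f x = g i x).
Proof.
move=> gc hf; apply: diff_crit => // y.
rewrite hf -sumrB.
apply: le_trans (ler_norm_sum _ _ _) _.
by apply: ler_sum => i _; rewrite -mulrBr normrM.
Qed.

Definition Gd (R : realType) n (eta : R) (x : 'rV[R]_n) i j y :=
  - eta * wt eta x y i * ((i == j)%:R - cc eta x y j).

Lemma sum_delta (R : realType) n (f : 'I_n -> R) i :
  \sum_j f j * (i == j)%:R = f i.
Proof.
rewrite (bigD1 i) //= eqxx mulr1 big1 ?addr0 // => j ji.
by rewrite eq_sym (negbTE ji) mulr0.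
Qed.

Lemma pv_diff (R : realType) n (eta : R) (x y : 'rV[R]_n) i :
  (0 < n)%N -> 0 < eta ->
  pv eta y i - pv eta x i = \sum_j (y - x) 0 j * Gd eta x i j y.
Proof.
move=> n0 e0.
have -> : \sum_j (y - x) 0 j * Gd eta x i j y =
    - eta * wt eta x y i * (\sum_j (y - x) 0 j * (i == j)%:R
                            - \sum_j (y - x) 0 j * cc eta x y j).
  rewrite -sumrB mulr_sumr; apply: eq_bigr => j _; rewrite /Gd; ring.
rewrite sum_delta -(opprK (\sum_j _)) -lam_diff //.
have ax := av_gt0 x i n0 e0; have ay := av_gt0 y i n0 e0.
move: ax ay; rewrite /pv /wt /av !mxE => ax ay.
by field; rewrite !lt0r_neq0.
Qed.

Lemma pv_diffble (R : realType) n (eta : R) (x : 'rV[R]_n) i :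
  (0 < n)%N -> 0 < eta ->
  differentiable (fun y => pv eta y i) x /\
  (forall j, 'D_(unitv R j) (fun y => pv eta y i) x = Gd eta x i j x).
Proof.
move=> n0 e0; apply: crit_eq => [j|y]; last exact: pv_diff.
apply: continuousM; first apply: continuousM.
- exact: cst_continuous.
- exact: wt_cont.
apply: continuousB; first exact: cst_continuous.
exact: cc_cont.
Qed.

Lemma vf_shift (R : realType) n (eta : R) (x y q : 'rV[R]_n) :
  vf eta y q - vf eta x q = \sum_i (y - x) 0 i * q 0 i.
Proof.
rewrite /vf; set B := log_barrier _ _.
have -> : \sum_i y 0 i * q 0 i + B - (\sum_i x 0 i * q 0 i + B)
   = \sum_i y 0 i * q 0 i - \sum_i x 0 i * q 0 i by ring.
rewrite -sumrB; apply: eq_bigr => i _; rewrite !mxE; ring.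
Qed.

Lemma Phi_diffble (R : realType) n (eta : R) (x : 'rV[R]_n) :
  (0 < n)%N -> 0 < eta ->
  differentiable (Phi_tilde eta) x /\
  (forall i, 'D_(unitv R i) (Phi_tilde eta) x = pv eta x i).
Proof.
move=> n0 e0.
apply: (diff_crit (g := fun i y => pv eta y i)) => [i|y].
  exact: pv_cont.
rewrite !Phi_val //.
have o1 := opt y n0 e0 (pvec_simplex x n0 e0).
have o2 := opt x n0 e0 (pvec_simplex y n0 e0).
have s1 := vf_shift eta x y (pvec eta x).
have s2 := vf_shift eta x y (pvec eta y).
have pE L i : pvec eta L 0 i = pv eta L i by rewrite mxE.
set E := \sum_i (y - x) 0 i * (pv eta y i - pv eta x i).
have Ee : E = \sum_i (y - x) 0 i * pvec eta y 0 i
              - \sum_i (y - x) 0 i * pvec eta x 0 i.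
  by rewrite -sumrB; apply: eq_bigr => i _; rewrite !pE mulrBr.
have Se : \sum_i (y - x) 0 i * pv eta x i = \sum_i (y - x) 0 i * pvec eta x 0 i.
  by apply: eq_bigr => i _; rewrite pE.
rewrite Se.
set D := _ - _ - _.
have hD : E <= D <= 0 by apply/andP; split; rewrite /D; lra.
apply: le_trans (_ : `|E| <= _).
  move/andP: hD => [h1 h2]; rewrite ler0_norm // ler_normr; apply/orP; right; lra.
apply: le_trans (ler_norm_sum _ _ _) _.
by apply: ler_sum => i _; rewrite normrM.
Qed.

Local Close Scope classical_set_scope.

Theorem lemma8 (R : realType) (N : nat) (eta : R) :
  (0 < N)%N -> 0 < eta ->
  differentially_consistent 2 (1 / eta) (Phi_tilde (N:=N) eta).
Proof.
move=> n0 e0.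
have Pe i : partial i (Phi_tilde (N:=N) eta) = fun y => pv eta y i.
  by apply/funext => y; rewrite /partial (Phi_diffble y n0 e0).2.
split; first split.
- by move=> x; exact: (Phi_diffble x n0 e0).1.
- by move=> i x; rewrite Pe; exact: (pv_diffble x i n0 e0).1.
move=> i x; rewrite Pe /partial (pv_diffble x i n0 e0).2 /Gd eqxx.
have ax := av_gt0 x i n0 e0.
have c0 := cc_ge0 x x i n0 e0.
have -> : 1 / eta * pv eta x i ^+ 2 = eta * wt eta x x i.
  by rewrite /pv /wt; field; rewrite !lt0r_neq0.
have w0 : 0 < eta * wt eta x x i by rewrite mulr_gt0 // wt_gt0.
have -> : true%:R = 1 :> R by [].
rewrite !mulNr opprK -[leRHS]mulr1 ler_wpM2l.
all: lra.
Qed.
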